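(* Let $M=(Q,P,\Sigma,\Delta,q_0,R,h)$ be a nondeleting mttr. Let $q\in Q$, $\sigma\in\Sigma^{(k)}$ with $k\ge 1$, $y\in Y$, and $p,p_1,\dots,p_k\in P$ such that $p=h_\sigma(p_1,\dots,p_k)$ and $L_{p_j}\neq\emptyset$ for every $j\in[k]$. Let $\zeta=\mathrm{rhs}_M(q,\sigma,\langle p_1,\dots,p_k\rangle)$. Suppose that $\mathrm{pout}_M((q,y),p)$ is finite and that a symbol $\langle r,x_i\rangle$ (with $i\in[k]$ and $r\in Q^{(m)}$) occurs in $\lfloor\zeta\rfloor_y$ at node $u$. Then for every $l\in[m]$ such that the node $ul$ of $\lfloor\zeta\rfloor_y$ is not labeled $\$$, the set $\mathrm{pout}_M((r,y_l),p_i)$ is finite.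
   Context: Trees: for a ranked alphabet $\Sigma$, $T_\Sigma$ is the set of finite ranked ordered trees over $\Sigma$, and $T_\Sigma(A)$ the trees over $\Sigma$ with additional rank-0 symbols from $A$. Nodes are addressed by Dewey paths: $\varepsilon$ is the root and $ui$ is the $i$-th child of $u$; $s[u]$ is the label and $s/u$ the subtree at $u$. $X_k=\{x_1,\dots,x_k\}$ are input variables and $Y=\{y_1,y_2,\dots\}$, $Y_m=\{y_1,\dots,y_m\}$ are parameters. A (deterministic bottom-up) tree automaton $(P,\Sigma,h)$ has a finite state set $P$ and maps $h_\sigma:P^k\to P$ for $\sigma\in\Sigma^{(k)}$; $\hat h:T_\Sigma\to P$ is its run, $\hat h(\sigma(s_1,\dots,s_k))=h_\sigma(\hat h(s_1),\dots,\hat h(s_k))$, and $L_p=\{s\in T_\Sigma\mid \hat h(s)=p\}$. A (total, deterministic) macro tree transducer with look-ahead (mttr) is $M=(Q,P,\Sigma,\Delta,q_0,R,h)$ where $Q$ is a ranked alphabet of states, $\Sigma,\Delta$ are ranked input/output alphabets, $(P,\Sigma,h)$ is a tree automaton (the look-ahead), $q_0\in Q^{(0)}$, and for each $q\in Q^{(m)}$, $\sigma\in\Sigma^{(k)}$, $p_1,\dots,p_k\in P$ there is exactly one rule $\langle q,\sigma(x_1:p_1,\dots,x_k:p_k)\rangle(y_1,\dots,y_m)\to t$ with $t=\mathrm{rhs}_M(q,\sigma,\langle p_1,\dots,p_k\rangle)\in T_{\Delta\cup\langle Q,X_k\rangle}(Y_m)$, where the symbol $\langle q',x_i\rangle$ has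 the rank of $q'$. For $q\in Q^{(m)}$ and $s=\sigma(s_1,\dots,s_k)\in T_\Sigma$, the $q$-translation $M_q(s)\in T_\Delta(Y_m)$ is obtained from $\mathrm{rhs}_M(q,\sigma,\langle \hat h(s_1),\dots,\hat h(s_k)\rangle)$ by replacing (recursively, innermost first) each subtree $\langle q',x_i\rangle(\xi_1,\dots,\xi_n)$ by $M_{q'}(s_i)$ with each $y_j$ replaced by (the result for) $\xi_j$; $M(s)=M_{q_0}(s)$. $M$ is nondeleting if in every rule with left-hand state of rank $m$ each parameter $y_1,\dots,y_m$ occurs in the right-hand side. Least common output form: for $Y'\subseteq Y$ and $s\in T_{\Delta\cup\langle Q,X\rangle}(Y)$, $\lfloor s\rfloor_{Y'}$ is the tree obtained from $s$ by replacing every maximal subtree containing no parameter from $Y'$ by a new rank-0 symbol $\$$ (i.e., $\lfloor y\rfloor_{Y'}=y$ for $y\in Y'$; $\lfloor\delta(s_1,\dots,s_n)\rfloor_{Y'}=\delta(\lfloor s_1\rfloor_{Y'},\dots,\lfloor s_n\rfloor_{Y'})$ if $s$ contains a parameter of $Y'$; otherwise $\$$). Write $\lfloor s\rfloor_y$ for $\lfloor s\rfloor_{\{y\}}$. For $q\in Q$, $p\in P$: $\mathrm{pout}_M((q,Y'),p)=\{\lfloor M_q(s)\rfloor_{Y'}\mid s\in L_p\}$ and $\mathrm{pout}_M((q,y),p)=\mathrm{pout}_M((q,\{y\}),p)$. *)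

(* Defs.v *)
From mathcomp Require Import all_boot.
Set Implicit Arguments.
Unset Strict Implicit.
Unset Printing Implicit Defensive.

Inductive tree (A : Type) : Type := Node of A & seq (tree A).
Arguments Node {A} _ _.

Fixpoint wranked (A : Type) (rk : A -> nat) (t : tree A) : bool :=
  let: Node a ch := t in (size ch == rk a) && all (wranked rk) ch.

(* Dewey addressing: paths are sequences of 1-based child indices;
   the empty path is the root.  [subtree_at t u] is [Some (t/u)] if u is a
   node of t, [None] otherwise; [label_at t u] is [t[u]]. *)
Fixpoint subtree_at (A : Type) (t : tree A) (u : seq nat) : option (tree A) :=
  match u with
  | [::] => Some t
  | i :: u' =>
      let: Node _ ch := t in
      if (0 < i) && (i <= size ch) then subtree_at (nth t ch i.-1) u' else None
  end.

Definition label_at (A : Type) (t : tree A) (u : seq nat) : option A :=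
  match subtree_at t u with Some (Node a _) => Some a | None => None end.

(* Labels of trees in T_{Delta u <Q,X>}(Y) extended with the symbol $:
   LD d   : output symbol d in Delta
   LQ r i : the symbol <r, x_i>  (i >= 1), of rank rank(r)
   LY j   : the parameter y_j    (j >= 1), of rank 0
   LDollar: the rank-0 symbol $ used by least common output forms. *)
Inductive lab (Q Delta : Type) : Type :=
  | LD of Delta
  | LQ of Q & nat
  | LY of nat
  | LDollar.
Arguments LD {Q Delta} _.
Arguments LQ {Q Delta} _ _.
Arguments LY {Q Delta} _.
Arguments LDollar {Q Delta}.

Section MTT.
Variables (Q P Sigma Delta : finType)
          (rkQ : Q -> nat) (rkS : Sigma -> nat) (rkD : Delta -> nat).

Local Notation ltree := (tree (lab Q Delta)).

Fixpoint wf_rhs (k m : nat) (t : ltree) : bool :=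
  let: Node a ch := t in
  (match a with
   | LD d => size ch == rkD d
   | LQ r i => (0 < i <= k) && (size ch == rkQ r)
   | LY j => (0 < j <= m) && (size ch == 0)
   | LDollar => false
   end) && all (wf_rhs k m) ch.

(* Total deterministic macro tree transducer with look-ahead
   M = (Q, P, Sigma, Delta, q0, R, h).  The rules R are given by [rhs]:
   rhs q sigma [p_1;..;p_k] = rhs_M(q, sigma, <p_1,..,p_k>). *)
Record mttr := Mttr {
  q0 : Q;
  la : Sigma -> seq P -> P;
  rhs : Q -> Sigma -> seq P -> ltree;
  q0_rank : rkQ q0 = 0;
  rhs_wf : forall q sigma ps, size ps = rkS sigma ->
             wf_rhs (rkS sigma) (rkQ q) (rhs q sigma ps)
}.

Fixpoint run (h : Sigma -> seq P -> P) (s : tree Sigma) : P :=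
  let: Node a ch := s in h a (map (run h) ch).

Definition inL (M : mttr) (p : P) (s : tree Sigma) : Prop :=
  wranked rkS s /\ run (la M) s = p.

Fixpoint subst (args : seq ltree) (t : ltree) : ltree :=
  let: Node a ch := t in
  match a with
  | LY j => if (0 < j) && (j <= size args) then nth t args j.-1 else t
  | _ => Node a (map (subst args) ch)
  end.

Definition dflt_tr : Q -> ltree := fun _ => Node LDollar [::].

Fixpoint eval_rhs (ts : seq (Q -> ltree)) (t : ltree) : ltree :=
  let: Node a ch := t in
  match a with
  | LQ r i => subst (map (eval_rhs ts) ch) (nth dflt_tr ts i.-1 r)
  | _ => Node a (map (eval_rhs ts) ch)
  end.

Fixpoint trans (M : mttr) (s : tree Sigma) (q : Q) : ltree :=
  let: Node sigma ss := s in
  eval_rhs (map (trans M) ss) (rhs M q sigma (map (run (la M)) ss)).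

Definition nondeleting (M : mttr) : Prop :=
  forall q sigma ps, size ps = rkS sigma ->
    forall j, 0 < j <= rkQ q ->
      exists u, label_at (rhs M q sigma ps) u = Some (LY j).

End MTT.

Fixpoint has_param (Q Delta : Type) (Y' : pred nat) (t : tree (lab Q Delta)) : bool :=
  let: Node a ch := t in
  (match a with LY j => Y' j | _ => false end) || has (has_param Y') ch.

Fixpoint lcf (Q Delta : Type) (Y' : pred nat) (t : tree (lab Q Delta)) : tree (lab Q Delta) :=
  let: Node a ch := t in
  if has_param Y' t then Node a (map (lcf Y') ch) else Node LDollar [::].

(* propositional membership in a list (no eqType needed) *)
Fixpoint In_seq (A : Type) (x : A) (l : seq A) : Prop :=
  match l with [::] => False | y :: l' => y = x \/ In_seq x l' end.

Definition pout_finite (Q P Sigma Delta : finType) (rkQ : Q -> nat) (rkS : Sigma -> nat)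
    (rkD : Delta -> nat) (M : mttr P rkQ rkS rkD) (q : Q) (Y' : pred nat) (p : P) : Prop :=
  exists l : seq (tree (lab Q Delta)),
    forall s, inL M p s -> In_seq (lcf Y' (trans M s q)) l.

(* Main.v *)
Require Import Defs.
From mathcomp Require Import all_boot.
Set Implicit Arguments.
Unset Strict Implicit.

Definition tree_ind' (A : Type) (Pr : tree A -> Prop)
  (H : forall a ch, (forall c, In_seq c ch -> Pr c) -> Pr (Node a ch)) : forall t, Pr t :=
  fix F t := match t with Node a ch => H a ch
    ((fix G (l : seq (tree A)) : forall c, In_seq c l -> Pr c :=
       match l return forall c, In_seq c l -> Pr c with
       | [::] => fun c (H0 : False) => match H0 with end
       | c0 :: l' => fun c Hc => match Hc with
           | or_introl e => eq_ind c0 Pr (F c0) c e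
           | or_intror h => G l' c h end
       end) ch) end.

Lemma In_seq_nth A (x0 : A) l n : n < size l -> In_seq (nth x0 l n) l.
Proof. elim: l n => [|a l IH] [|n] //= H; [by left | right; exact: IH]. Qed.

Lemma In_seq_map A B (f : A -> B) x l : In_seq x l -> In_seq (f x) (map f l).
Proof. elim: l => [|a l IH] //= [->|H]; [by left | right; exact: IH]. Qed.

Lemma In_seq_catl A (x : A) l1 l2 : In_seq x l1 -> In_seq x (l1 ++ l2).
Proof. elim: l1 => [|a l IH] //= [->|H]; [by left | right; exact: IH]. Qed.
Lemma In_seq_catr A (x : A) l1 l2 : In_seq x l2 -> In_seq x (l1 ++ l2).
Proof. elim: l1 => [|a l IH] //= H; right; exact: IH. Qed.

Lemma In_seq_flatten A (x : A) l ls : In_seq l ls -> In_seq x l -> In_seq x (flatten ls).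
Proof.
elim: ls => [|a ls IH] //= [->|H] Hx; first exact: In_seq_catl.
apply: In_seq_catr; exact: IH.
Qed.

Lemma all_In A (f : pred A) l x : all f l -> In_seq x l -> f x.
Proof. elim: l => [|a l IH] //= /andP[Ha Hl] [<-|H] //; exact: IH. Qed.

Lemma In_all A (f : pred A) l : (forall x, In_seq x l -> f x) -> all f l.
Proof. elim: l => [|a l IH] //= H; rewrite H ?IH //; [move=> x Hx; apply: H; by right | by left]. Qed.

Lemma has_In A (f : pred A) l : has f l -> exists x, In_seq x l /\ f x.
Proof.
elim: l => [|a l IH] //= /orP[Ha|Hl]; first by exists a; split => //; left.
have [x [H1 H2]] := IH Hl; exists x; split => //; by right.
Qed.

Lemma In_has A (f : pred A) l x : In_seq x l -> f x -> has f l.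
Proof. elim: l => [|a l IH] //= [<-|H] Hx; first by rewrite Hx. by rewrite IH ?orbT. Qed.

Fixpoint allcomb A (ls : seq (seq A)) : seq (seq A) :=
  match ls with
  | [::] => [:: [::]]
  | l :: ls' => flatten (map (fun x => map (cons x) (allcomb ls')) l)
  end.

Fixpoint Fa2 A (xs : seq A) (ls : seq (seq A)) : Prop :=
  match xs, ls with
  | [::], [::] => True
  | x :: xs', l :: ls' => In_seq x l /\ Fa2 xs' ls'
  | _, _ => False
  end.

Lemma In_allcomb A (xs : seq A) ls : Fa2 xs ls -> In_seq xs (allcomb ls).
Proof.
elim: xs ls => [|x xs IH] [|l ls] //=; first by left.
move=> [Hx H].
apply: (In_seq_flatten (l := map (cons x) (allcomb ls))).
  exact: (In_seq_map (fun x => map (cons x) (allcomb ls))).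
apply: In_seq_map; exact: IH.
Qed.

Lemma Fa2_map A B (f : B -> A) (g : B -> seq A) (l : seq B) :
  (forall c, In_seq c l -> In_seq (f c) (g c)) -> Fa2 (map f l) (map g l).
Proof.
elim: l => [|a l IH] //= H; split; first by apply: H; left.
apply: IH => c Hc; apply: H; by right.
Qed.

Section Gen.
Variables Q Delta : finType.
Local Notation ltree := (tree (lab Q Delta)).

Fixpoint yleaf (t : ltree) : bool :=
  let: Node a ch := t in (if a is LY _ then nilp ch else true) && all yleaf ch.

Lemma subtree_has Y (t t' : ltree) v : subtree_at t v = Some t' -> has_param Y t' -> has_param Y t.
Proof.
elim: v t => [|i v IH] [a ch] /=; first by case=> <-.
case: ifP => // /andP[H0 H1] Hs Hp.
apply/orP; right; apply: (In_has (x := nth (Node a ch) ch i.-1)).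
  apply: In_seq_nth; by rewrite prednK.
exact: IH Hs Hp.
Qed.

Lemma label_has (Y : pred nat) (t : ltree) w j : label_at t w = Some (LY j) -> Y j -> has_param Y t.
Proof.
rewrite /label_at; case E: subtree_at => [[a ch]|] // [Ha] HY.
apply: (subtree_has E) => /=; by rewrite Ha HY.
Qed.

Lemma has_label j (t : ltree) : has_param (pred1 j) t -> exists w, label_at t w = Some (LY j).
Proof.
elim/tree_ind': t => a ch IH /= /orP[Ha|Hh].
  exists [::]; rewrite /label_at /=; case: a Ha => // j' /eqP -> //.
move/has_nthP: Hh => /(_ (Node a ch)) [n Hn Hp].
have [w Hw] := IH _ (In_seq_nth (Node a ch) Hn) Hp.
exists (n.+1 :: w); move: Hw; rewrite /label_at /= Hn /=; done.
Qed.

Lemma subtree_lcf Y (t t' : ltree) v : subtree_at t v = Some t' -> has_param Y t' ->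
  subtree_at (lcf Y t) v = Some (lcf Y t').
Proof.
elim: v t => [|i v IH] [a ch] /=; first by case=> <-.
move=> Hs Hp.
have Ht : has_param Y (Node a ch) by apply: (subtree_has (v := i :: v)) Hp.
move: Ht => /= Ht; rewrite Ht /= size_map; move: Hs; case: ifP => // /andP[H0 H1] Hs.
rewrite (nth_map (Node a ch)); last by rewrite prednK.
exact: IH.
Qed.

Lemma lcf_subtree Y (t t'' : ltree) u : subtree_at (lcf Y t) u = Some t'' ->
  (forall ch, t'' <> Node LDollar ch) ->
  exists z, subtree_at t u = Some z /\ has_param Y z /\ t'' = lcf Y z.
Proof.
elim: u t => [|i u IH] [a ch] /=.
  case=> <-; case: ifP => Hh Hn; last by case: (Hn [::]).
  exists (Node a ch); split => //; split => //=; by rewrite Hh.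
case: ifP => Hh /=; last by case: i {IH}.
rewrite size_map; case: ifP => // /andP[H0 H1].
rewrite (nth_map (Node a ch)); last by rewrite prednK.
move=> Hs Hn; exact: IH Hs Hn.
Qed.

Lemma subtree_cat (t : ltree) u v :
  subtree_at t (u ++ v) = obind (fun t' => subtree_at t' v) (subtree_at t u).
Proof.
elim: u t => [|i u IH] [a ch] //=; case: ifP => //.
Qed.

Lemma subst_yleaf (args : seq ltree) (t : ltree) : yleaf t -> all yleaf args -> yleaf (subst args t).
Proof.
elim/tree_ind': t => a ch IH /= /andP[Ha Hc] Hargs.
have Hm : all yleaf (map (subst args) ch).
  rewrite all_map; apply: In_all => x Hx /=; apply: IH => //; exact: all_In Hc Hx.
case: a Ha => [d|r n|j|] Ha //=.
case: ifP => [/andP[H0 H1]|_]; last by rewrite /= Ha Hc.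
apply: (all_In Hargs); apply: In_seq_nth; by rewrite prednK.
Qed.

Lemma subst_at (args : seq ltree) (t : ltree) w j x0 : yleaf t -> label_at t w = Some (LY j) ->
  0 < j <= size args -> subtree_at (subst args t) w = Some (nth x0 args j.-1).
Proof.
move=> Hy Hl Hj.
elim: w t Hy Hl => [|i w IH] [a ch] /=.
  rewrite /label_at /= => _ [->]; rewrite Hj; congr Some; apply: set_nth_default; by rewrite prednK //; case/andP: Hj.
move=> /andP[Ha Hc]; rewrite /label_at /=.
case: ifP => // /andP[H0 H1] Hl.
have Hi : i.-1 < size ch by rewrite prednK.
rewrite (set_nth_default x0) // in Hl.
have Hyc : yleaf (nth x0 ch i.-1) by apply: (all_In Hc); apply: In_seq_nth.
case: a Ha Hl => [d|r n|j'|] Ha Hl /=.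
3: by case: ch Ha H1 Hi {Hl Hc Hyc}.
all: rewrite size_map H0 H1 /= (nth_map x0) //; exact: IH.
Qed.

Lemma subst_has Y (args : seq ltree) (t : ltree) l x0 : yleaf t -> has_param (pred1 l) t ->
  0 < l <= size args -> has_param Y (nth x0 args l.-1) -> has_param Y (subst args t).
Proof.
move=> Hy /has_label [w Hw] Hl Hp.
apply: (subtree_has (subst_at x0 Hy Hw Hl) Hp).
Qed.

Fixpoint all_subtrees (t : ltree) : seq ltree :=
  let: Node a ch := t in t :: flatten (map all_subtrees ch).

Lemma all_subtrees_in (t t' : ltree) v : subtree_at t v = Some t' -> In_seq t' (all_subtrees t).
Proof.
elim: v t => [|i v IH] [a ch] /=; first by case=> <-; left.
case: ifP => // /andP[H0 H1] Hs; right.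
apply: (In_seq_flatten (l := all_subtrees (nth (Node a ch) ch i.-1))); last exact: IH.
apply: In_seq_map; apply: In_seq_nth; by rewrite prednK.
Qed.

Fixpoint cands (l : nat) (t : ltree) : seq ltree :=
  let: Node a ch := t in
  Node LDollar [::] :: Node (LY l) [::] :: map (Node a) (allcomb (map (cands l) ch)).

Lemma cands_in Y (args : seq ltree) (t : ltree) l x0 : yleaf t -> 0 < l <= size args ->
  has_param Y (nth x0 args l.-1) ->
  In_seq (lcf (pred1 l) t) (cands l (lcf Y (subst args t))).
Proof.
move=> Hy Hl Hp; elim/tree_ind': t Hy => a ch IH Hy.
have [Ht|Ht] := boolP (has_param (pred1 l) (Node a ch)); last first.
  move: Ht => /= /negbTE Ht; rewrite Ht; case: (lcf _ _) => ? ? /=; by left.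
have Hs : has_param Y (subst args (Node a ch)) by exact: subst_has Hy Ht Hl Hp.
move: Ht Hy => /= Ht /andP[Ha Hc]; rewrite Ht.
case: a Ha Ht Hs => [d|r n|j|] Ha Ht Hs /=.
- move: Hs => /= Hs; rewrite Hs /=; right; right; apply: In_seq_map; apply: In_allcomb.
  rewrite -map_comp -map_comp; apply: Fa2_map => c Hcc /=; apply: IH => //; exact: all_In Hc Hcc.
- move: Hs => /= Hs; rewrite Hs /=; right; right; apply: In_seq_map; apply: In_allcomb.
  rewrite -map_comp -map_comp; apply: Fa2_map => c Hcc /=; apply: IH => //; exact: all_In Hc Hcc.
- case: ch Ha IH Hc Ht Hs => // _ _ _ + _; rewrite orbF => /eqP ->.
  case: (lcf _ _) => ? ? /=; right; by left.
- move: Hs => /= Hs; rewrite Hs /=; right; right; apply: In_seq_map; apply: In_allcomb.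
  rewrite -map_comp -map_comp; apply: Fa2_map => c Hcc /=; apply: IH => //; exact: all_In Hc Hcc.
Qed.

End Gen.
Arguments yleaf {Q Delta} t.
Arguments all_subtrees {Q Delta} t.
Arguments cands {Q Delta} l t.

Section MT.
Variables (Q P Sigma Delta : finType)
          (rkQ : Q -> nat) (rkS : Sigma -> nat) (rkD : Delta -> nat).
Local Notation ltree := (tree (lab Q Delta)).
Local Notation dt := (@dflt_tr Q Delta).

Definition Pts (ts : seq (Q -> ltree)) k := size ts = k /\
  forall idx r, idx < k -> yleaf (nth dt ts idx r) /\
    forall j, 0 < j <= rkQ r -> has_param (pred1 j) (nth dt ts idx r).

Lemma eval_yleaf k m (ts : seq (Q -> ltree)) (t : ltree) :
  wf_rhs rkQ rkD k m t -> Pts ts k -> yleaf (eval_rhs ts t).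
Proof.
move=> + HP; elim/tree_ind': t => a ch IH /= /andP[Ha Hc].
have Hm : all yleaf (map (eval_rhs ts) ch).
  rewrite all_map; apply: In_all => x Hx /=; apply: IH => //; exact: all_In Hc Hx.
case: a Ha => [d|r i|j|] Ha //=.
- apply: subst_yleaf => //; case/andP: Ha => /andP[H0 H1] _.
  by case: (HP.2 i.-1 r); rewrite ?prednK.
- by case/andP: Ha => _; case: ch {IH Hc Hm}.
Qed.

Lemma eval_has (Y : pred nat) k m (ts : seq (Q -> ltree)) (t : ltree) :
  wf_rhs rkQ rkD k m t -> Pts ts k -> has_param Y t -> has_param Y (eval_rhs ts t).
Proof.
move=> + HP; elim/tree_ind': t => a ch IH /= /andP[Ha Hc].
have Hch : has (has_param Y) ch -> has (has_param Y) (map (eval_rhs ts) ch).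
  move/has_In => [x [Hx Hp]]; apply: (In_has (In_seq_map _ Hx)); apply: IH => //; exact: all_In Hc Hx.
case: a Ha => [d|r i|j|] Ha //=.
- move/has_nthP => /(_ (Node (LQ r i) ch)) [n Hn Hp].
  case/andP: Ha => /andP[H0 H1] /eqP Hs.
  have [Hy Hpar] := HP.2 i.-1 r ltac:(by rewrite prednK).
  apply: (subst_has (l := n.+1) (x0 := Node (LQ r i) ch) Hy); first by apply: Hpar; rewrite -Hs.
    by rewrite size_map.
  rewrite /= (nth_map (Node (LQ r i) ch)) //; apply: IH => //; [exact: In_seq_nth | apply: (all_In Hc); exact: In_seq_nth].
- by move=> /orP[->|/Hch ->]; rewrite ?orbT.
Qed.

Lemma eval_sub k m (ts : seq (Q -> ltree)) (t z : ltree) u :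
  wf_rhs rkQ rkD k m t -> Pts ts k -> subtree_at t u = Some z ->
  exists v, subtree_at (eval_rhs ts t) v = Some (eval_rhs ts z).
Proof.
move=> + HP; elim: u t => [|i u IH] [a ch] /=; first by move=> _ [<-]; exists [::].
move=> /andP[Ha Hc]; case: ifP => // /andP[H0 H1] Hs.
have Hi : i.-1 < size ch by rewrite prednK.
have Hwc : wf_rhs rkQ rkD k m (nth (Node a ch) ch i.-1) by apply: (all_In Hc); exact: In_seq_nth.
have [v Hv] := IH _ Hwc Hs.
case: a Ha Hs Hwc Hv => [d|r n|j|] Ha Hs Hwc Hv //=.
- exists (i :: v) => /=; by rewrite size_map H0 H1 /= (nth_map (Node (LD d) ch)).
- case/andP: Ha => /andP[Hn0 Hn1] /eqP Hsz.
  have [Hy Hpar] := HP.2 n.-1 r ltac:(by rewrite prednK).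
  have [w Hw] := has_label (Hpar i ltac:(by rewrite H0 -Hsz)).
  have := subst_at (Node (LQ r n) ch) Hy Hw (j := i) (args := map (eval_rhs ts) ch).
  rewrite size_map H0 H1 (nth_map (Node (LQ r n) ch)) // => /(_ isT) Hsub.
  exists (w ++ v); by rewrite subtree_cat Hsub.
- move: Ha => /andP[_ /eqP /size0nil Hch]; move: H0 H1; rewrite Hch; by case: i {IH Hs Hwc Hv Hi}.
Qed.

Variable M : mttr P rkQ rkS rkD.
Hypothesis ND : nondeleting M.

Lemma trans_props (s : tree Sigma) : wranked rkS s -> forall q,
  yleaf (trans M s q) /\ forall j, 0 < j <= rkQ q -> has_param (pred1 j) (trans M s q).
Proof.
elim/tree_ind': s => a ss IH /= /andP[/eqP Hsz Hall] q.
have HP : Pts (map (trans M) ss) (rkS a).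
  split; first by rewrite size_map.
  move=> idx r Hidx; rewrite (nth_map (Node a ss)) ?Hsz //.
  apply: IH; [apply: In_seq_nth; by rewrite Hsz | apply: (all_In Hall); apply: In_seq_nth; by rewrite Hsz].
have Hps : size (map (run (la M)) ss) = rkS a by rewrite size_map.
have Hwf := rhs_wf M q Hps.
split; first exact: eval_yleaf Hwf HP.
move=> j Hj; have [w Hw] := ND Hps Hj.
apply: eval_has Hwf HP _; apply: (label_has Hw); exact: eqxx.
Qed.

End MT.

Lemma Pts_map (Q P Sigma Delta : finType) (rkQ : Q -> nat) (rkS : Sigma -> nat) (rkD : Delta -> nat)
  (M : mttr P rkQ rkS rkD) (ss : seq (tree Sigma)) :
  nondeleting M -> all (wranked rkS) ss -> Pts rkQ (map (trans M) ss) (size ss).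
Proof.
move=> ND Hall; split; first by rewrite size_map.
move=> idx r Hidx; case: ss Hidx Hall => // s0 ss' Hidx Hall.
rewrite (nth_map s0) //; apply: trans_props => //; apply: (all_In Hall); exact: In_seq_nth.
Qed.

Lemma choose_seq A (d : A) (R : nat -> A -> Prop) n :
  (forall j, j < n -> exists s, R j s) -> exists ss, size ss = n /\ forall j, j < n -> R j (nth d ss j).
Proof.
elim: n => [|n IH] H; first by exists [::].
have [ss [Hs HR]] := IH (fun j Hj => H j (ltnW Hj)).
have [s Hs'] := H n (ltnSn n).
exists (rcons ss s); split; first by rewrite size_rcons Hs.
move=> j Hj; rewrite nth_rcons Hs; case: ltngtP => Hjn.
- exact: HR.
- by move: Hj; rewrite ltnS leqNgt Hjn.
- by rewrite Hjn.
Qed.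

Lemma subtree_wf (Q Delta : finType) rkQ rkD k m (t z : tree (lab Q Delta)) u :
  subtree_at t u = Some z -> wf_rhs rkQ rkD k m t -> wf_rhs rkQ rkD k m z.
Proof.
elim: u t => [|i u IH] [a ch] /=; first by case=> <-.
case: ifP => // /andP[H0 H1] Hs /andP[_ Hc]; apply: (IH _ Hs).
apply: (all_In Hc); apply: In_seq_nth; by rewrite prednK.
Qed.

Theorem mainTheorem1 (Q P Sigma Delta : finType)
    (rkQ : Q -> nat) (rkS : Sigma -> nat) (rkD : Delta -> nat)
    (M : mttr P rkQ rkS rkD) (q : Q) (sigma : Sigma) (y : nat) (p : P) (ps : seq P) :
  nondeleting M ->
  0 < rkS sigma ->
  0 < y ->
  size ps = rkS sigma ->
  p = la M sigma ps ->
  (forall j, j < rkS sigma -> exists s, inL M (nth p ps j) s) ->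
  pout_finite M q (pred1 y) p ->
  forall (u : seq nat) (r : Q) (i : nat),
    0 < i <= rkS sigma ->
    label_at (lcf (pred1 y) (rhs M q sigma ps)) u = Some (LQ r i) ->
    forall l, 0 < l <= rkQ r ->
      label_at (lcf (pred1 y) (rhs M q sigma ps)) (u ++ [:: l]) <> Some LDollar ->
      pout_finite M r (pred1 l) (nth p ps i.-1).
Proof.
move=> ND Hk Hy Hps Hp Hne [L HL] u r i /andP[Hi0 Hi1] Hlab l /andP[Hl0 Hl1] Hlab2.
set zeta := rhs M q sigma ps in Hlab Hlab2.
have Hwz : wf_rhs rkQ rkD (rkS sigma) (rkQ q) zeta := rhs_wf M q Hps.
move: Hlab; rewrite /label_at; case Eu: (subtree_at (lcf (pred1 y) zeta) u) => [[a ch']|] // [Ha].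
have [z [Hz [Hpz Hlz]]] := lcf_subtree Eu (fun ch Hc => ltac:(by case: Hc; rewrite Ha)).
have Hwfz := subtree_wf Hz Hwz.
case: z Hz Hpz Hlz Hwfz => a' chz Hz Hpz Hlz Hwfz.
move: Hlz; rewrite /= in Hpz; rewrite /= Hpz => -[Ha' Hch']; subst a' ch' a.
move: Hwfz => /= /andP[/andP[_ /eqP Hszc] Hwc].
set c := nth (Node (LQ r i) chz) chz l.-1.
have Hlc : l.-1 < size chz by rewrite Hszc prednK.
have Hwfc : wf_rhs rkQ rkD (rkS sigma) (rkQ q) c by apply: (all_In Hwc); exact: In_seq_nth.
have Hpc : has_param (pred1 y) c.
  move: Hlab2; rewrite /label_at subtree_cat Eu /= size_map Hszc Hl0 Hl1 /=.
  rewrite (nth_map (Node (LQ r i) chz)) // -/c.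
  rewrite /c; case: (nth _ _ _) => a0 ch0 /=; by case: ifP.
have [ss [Hss Hssp]] := choose_seq (Node sigma [::]) Hne.
set L' := flatten (map (cands l) (flatten (map all_subtrees L))).
exists L' => t [Hwt Hrt].
set chs := set_nth (Node sigma [::]) ss i.-1 t.
have Hi : i.-1 < rkS sigma by rewrite prednK.
have Hszs : size chs = rkS sigma.
  by rewrite /chs size_set_nth Hss; apply/maxn_idPr; rewrite prednK.
have Hnth : forall j, j < rkS sigma -> inL M (nth p ps j) (nth (Node sigma [::]) chs j).
  move=> j Hj; rewrite /chs nth_set_nth /=; case: eqP => [->|_]; last exact: Hssp.
  by split.
have Hrun : map (run (la M)) chs = ps.
  apply: (eq_from_nth (x0 := p)); first by rewrite size_map Hszs Hps.
  move=> j; rewrite size_map Hszs => Hj.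
  rewrite (nth_map (Node sigma [::])) ?Hszs //; by case: (Hnth j Hj).
have Hallw : all (wranked rkS) chs.
  apply/(all_nthP (Node sigma [::])) => j; rewrite Hszs => Hj; by case: (Hnth j Hj).
have HinL : inL M p (Node sigma chs).
  split; first by rewrite /= Hszs eqxx Hallw.
  by rewrite /= Hrun Hp.
have HW := HL _ HinL.
set ts := map (trans M) chs.
have HP : Pts rkQ ts (rkS sigma) by rewrite -Hszs; exact: Pts_map.
have Htr : trans M (Node sigma chs) q = eval_rhs ts zeta by rewrite /= Hrun.
have [v Hv] := eval_sub Hwz HP Hz.
have Hts : nth (dflt_tr Delta) ts i.-1 = trans M t.
  rewrite /ts (nth_map (Node sigma [::])) ?Hszs // /chs nth_set_nth /= eqxx //.
have [HyT HpT] := trans_props ND Hwt r.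
have HpTl := HpT l (ltac:(by rewrite Hl0 Hl1)).
have Hpec : has_param (pred1 y) (eval_rhs ts c) := eval_has Hwfc HP Hpc.
set args := map (eval_rhs ts) chz.
have Hargs : 0 < l <= size args by rewrite size_map Hl0 Hszc Hl1.
have Hnarg : nth (eval_rhs ts c) args l.-1 = eval_rhs ts c by rewrite /args (nth_map (Node (LQ r i) chz)).
have Hez : eval_rhs ts (Node (LQ r i) chz) = subst args (trans M t r) by rewrite /= Hts.
have Hpz' : has_param (pred1 y) (eval_rhs ts (Node (LQ r i) chz)).
  rewrite Hez; apply: (subst_has (x0 := eval_rhs ts c) HyT HpTl Hargs); by rewrite Hnarg.
have Hsub := subtree_lcf Hv Hpz'.
have Hin1 := all_subtrees_in Hsub.
have Hin2 := cands_in (x0 := eval_rhs ts c) HyT Hargs (ltac:(by rewrite Hnarg; exact: Hpec)).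
rewrite -Hez in Hin2.
apply: (In_seq_flatten _ Hin2); apply: In_seq_map.
apply: (In_seq_flatten _ Hin1); apply: In_seq_map.
by rewrite -Htr.
Qed.
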